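(* Let $\mathbf{T}=(T_1,\dots,T_m)$ and $\mathbf{T}^0=(T^0_1,\dots,T^0_m)$ be real random vectors and $\mathcal{H}_0\subset[m]$ such that for every $i\in\mathcal{H}_0$, $(T_i,T_i^0\mid\mathbf{T}_{-i},\mathbf{T}^0_{-i})\stackrel{d}{=}(T_i^0,T_i\mid\mathbf{T}_{-i},\mathbf{T}^0_{-i})$. Let $g(\cdot;\mathbf{T},\mathbf{T}^0)$ be a (data-dependent) score function and define $U_i=g(T_i;\mathbf{T},\mathbf{T}^0)$, $U_i^0=g(T_i^0;\mathbf{T},\mathbf{T}^0)$, $i\in[m]$. For $\mathcal{J}\subset[m]$ let $(\mathbf{T},\mathbf{T}^0)_{\mathrm{swap}(\mathcal{J})}$ denote the pair of vectors obtained by swapping $T_i$ and $T_i^0$ for each $i\in\mathcal{J}$. If $g(\cdot;(\mathbf{T},\mathbf{T}^0)_{\mathrm{swap}(\mathcal{J})})=g(\cdot;(\mathbf{T},\mathbf{T}^0))$ for all $\mathcal{J}\subset[m]$, then for every $i\in\mathcal{H}_0$, $$(U_i,U_i^0\mid\mathbf{U}_{-i},\mathbf{U}^0_{-i})\stackrel{d}{=}(U_i^0,U_i\mid\mathbf{U}_{-i},\mathbf{U}^0_{-i}),$$ where $\mathbf{U}_{-i}=(U_k:k\ne i)$, $\mathbf{U}^0_{-i}=(U^0_k:k\ne i)$.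
   Context: For a vector $\mathbf{a}=(a_1,\dots,a_m)$, $\mathbf{a}_{-i}$ denotes the vector with the $i$-th entry removed. *)

(* Defs.v *)
From HB Require Import structures.
From mathcomp Require Import all_boot all_order all_algebra.
From mathcomp Require Import all_classical all_reals all_analysis.
Set Implicit Arguments. Unset Strict Implicit. Unset Printing Implicit Defensive.
Import Order.TTheory GRing.Theory Num.Theory.
Local Open Scope classical_set_scope.
Local Open Scope ring_scope.

(* A pair of vectors (t, t0) in R^m x R^m, with R^m = m.-tuple R carrying the
   product (coordinate-generated) sigma-algebra of the library. *)
Definition pairvec (R : realType) (m : nat) := (m.-tuple R * m.-tuple R)%type.

Definition swap_set (R : realType) (m : nat) (J : {set 'I_m})
    (p : pairvec R m) : pairvec R m :=
  ([tuple if k \in J then tnth p.2 k else tnth p.1 k | k < m],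
   [tuple if k \in J then tnth p.1 k else tnth p.2 k | k < m]).

(* Conditional equality in distribution given Z means equality of the joint
   laws of (pair, Z); here this is: the joint law of (X, X0) equals the
   joint law of (X, X0) with the i-th coordinates swapped. *)
Definition cond_swap_exch d (Omega : measurableType d) (R : realType)
    (P : probability Omega R) (m : nat)
    (X X0 : Omega -> m.-tuple R) (i : 'I_m) : Prop :=
  forall A : set (pairvec R m), measurable A ->
    P ((fun w => (X w, X0 w)) @^-1` A) =
    P ((fun w => swap_set [set i] (X w, X0 w)) @^-1` A).

Definition score_vec (R : realType) (m : nat) (g : R -> pairvec R m -> R)
    (x : m.-tuple R) (p : pairvec R m) : m.-tuple R :=
  [tuple g (tnth x k) p | k < m].

(* Main.v *)
Require Import Defs.
From HB Require Import structures.
From mathcomp Require Import all_boot all_order all_algebra.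
From mathcomp Require Import all_classical all_reals all_analysis.
Import Order.TTheory GRing.Theory Num.Theory.
Local Open Scope classical_set_scope.
Local Open Scope ring_scope.

Theorem proposition1 (d : measure_display) (Omega : measurableType d)
  (R : realType) (P : probability Omega R) (m : nat)
  (T T0 : Omega -> m.-tuple R)
  (mT : measurable_fun setT T) (mT0 : measurable_fun setT T0)
  (H0 : {set 'I_m})
  (hexch : forall i, i \in H0 -> cond_swap_exch P T T0 i)
  (g : R -> pairvec R m -> R)
  (mg : measurable_fun setT (fun q : R * pairvec R m => g q.1 q.2))
  (ginv : forall (J : {set 'I_m}) (p : pairvec R m),
      g^~ (swap_set J p) = g^~ p) :
  forall i, i \in H0 ->
    cond_swap_exch P
      (fun w => score_vec g (T w) (T w, T0 w))
      (fun w => score_vec g (T0 w) (T w, T0 w)) i.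
Proof.
move=> i iH A mA.
pose F := fun p : pairvec R m => (score_vec g p.1 p, score_vec g p.2 p).
have mF : measurable_fun [set: pairvec R m] F.
  apply/measurable_fun_pairP; split.
  - apply/measurable_fun_tnthP => k /=.
    have -> : (@tnth m R ^~ k \o (fst \o F)) = (fun q : R * pairvec R m => g q.1 q.2)
        \o (fun p : pairvec R m => (tnth p.1 k, p)).
      by apply: funext => p /=; rewrite tnth_mktuple.
    apply: measurableT_comp => //; apply: measurable_fun_pair => //.
    exact: (measurableT_comp (@measurable_tnth _ _ m k) measurable_fst).
  - apply/measurable_fun_tnthP => k /=.
    have -> : (@tnth m R ^~ k \o (snd \o F)) = (fun q : R * pairvec R m => g q.1 q.2)
        \o (fun p : pairvec R m => (tnth p.2 k, p)).
      by apply: funext => p /=; rewrite tnth_mktuple.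
    apply: measurableT_comp => //; apply: measurable_fun_pair => //.
    exact: (measurableT_comp (@measurable_tnth _ _ m k) measurable_snd).
have mFA : measurable (F @^-1` A).
  by rewrite -[F @^-1` A]setTI; apply: mF.
have comm : forall p, swap_set [set i]%SET (F p) = F (swap_set [set i]%SET p).
  move=> p.
  have G x : g x (swap_set [set i]%SET p) = g x p.
    exact: (congr1 (fun f => f x) (ginv [set i]%SET p)).
  rewrite {2}/F /score_vec.
  move: G; set q := swap_set [set i]%SET p => G.
  rewrite /F /swap_set /=.
  congr pair; apply: eq_from_tnth => k; rewrite !tnth_mktuple G;
    by case: ifP.
rewrite /cond_swap_exch.
have E1 : (fun w => (score_vec g (T w) (T w, T0 w), score_vec g (T0 w) (T w, T0 w)))
   @^-1` A = (fun w => (T w, T0 w)) @^-1` (F @^-1` A) by reflexivity.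
have E2 : (fun w => swap_set [set i]%SET (score_vec g (T w) (T w, T0 w), score_vec g (T0 w) (T w, T0 w)))
   @^-1` A = (fun w => swap_set [set i]%SET (T w, T0 w)) @^-1` (F @^-1` A).
  transitivity ((fun w => F (swap_set [set i]%SET (T w, T0 w))) @^-1` A); last by reflexivity.
  by congr (_ @^-1` A); apply: funext => w; exact: (comm (T w, T0 w)).
rewrite E1 E2; exact: (hexch i iH (F @^-1` A) mFA).
Qed.
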